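(* Let $\mathbb F$ be a field of characteristic $p$, $S=\{R_0,\dots,R_d\}$ a $p'$-valenced scheme on $X$, $x\in X$, $\mathcal T=\mathcal T(x)$, $E_a^*=E_a^*(x)$, and let $M$ lie in the Jacobson radical of $\mathcal T$. Then (i) there is no $R_a\in S$ with $k_a=1$ and $E_a^*M\neq O$; and (ii) there is no $R_a\in S$ with $k_a=1$ and $ME_a^*\neq O$.
   Context: Let $X$ be a nonempty finite set. A scheme of class $d$ on $X$ is a partition $S=\{R_0,\dots,R_d\}$ of $X\times X$ into nonempty sets such that $R_0=\{(b,b):b\in X\}$; for each $c$ there is $c'$ with $R_{c'}=\{(f,e):(e,f)\in R_c\}$; and for all $i,j,k$ the intersection number $p_{ij}^k=|\{\ell\in X:(m,\ell)\in R_i,(\ell,n)\in R_j\}|$ does not depend on $(m,n)\in R_k$. The valency is $k_a=p_{aa'}^0$. $S$ is $p'$-valenced if no valency $k_a$ is divisible by $p$ (every scheme is $0'$-valenced). For $y\in X$, $yR_a=\{z:(y,z)\in R_a\}$; $A_a\in M_X(\mathbb F)$ is the $(0,1)$ adjacency matrix of $R_a$, $E_a^*(y)$ is the diagonal $(0,1)$-matrix with ones exactly at positions indexed by $yR_a$, $O$ is the zero matrix, and $\mathcal T(y)$ is the $\mathbb F$-subalgebra of $M_X(\mathbb F)$ generated by $A_0,\dots,A_d,E_0^*(y),\dots,E_d^*(y)$. *)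

(* Defs.v *)
From mathcomp Require Import all_boot all_order all_algebra.
Set Implicit Arguments. Unset Strict Implicit. Unset Printing Implicit Defensive.
Import GRing.Theory.
Local Open Scope ring_scope.

(* The finite set X is represented as 'I_n; a scheme of class d is given by
   the function r : X -> X -> 'I_d.+1 with R_c = {(y,z) | r y z = c}. *)
Section Scheme.
Variables (n d : nat).
Implicit Types (r : 'I_n -> 'I_n -> 'I_d.+1).

Definition inter_num r (i j : 'I_d.+1) (m m' : 'I_n) : nat :=
  #|[set l : 'I_n | (r m l == i) && (r l m' == j)]|.

Definition is_scheme r : Prop :=
  (0 < n)%N /\
  (forall c : 'I_d.+1, exists y z, r y z = c) /\
  (forall y z, r y z = ord0 <-> y = z) /\
  (forall c : 'I_d.+1, exists c' : 'I_d.+1, forall y z, r z y = c <-> r y z = c') /\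
  (forall i j k : 'I_d.+1, forall m1 n1 m2 n2,
      r m1 n1 = k -> r m2 n2 = k -> inter_num r i j m1 n1 = inter_num r i j m2 n2).

(* |y R_a|; for a scheme this is independent of y and equals k_a = p_{aa'}^0 *)
Definition valency_at r (a : 'I_d.+1) (y : 'I_n) : nat := #|[set z | r y z == a]|.

(* p'-valenced: no valency divisible by p (for p = 0: 0 %| k iff k = 0) *)
Definition p'valenced (p : nat) r : Prop :=
  forall (a : 'I_d.+1) (y : 'I_n), ~~ (p %| valency_at r a y)%N.

Variable F : fieldType.

Definition adj_mx r (a : 'I_d.+1) : 'M[F]_n := \matrix_(i, j) ((r i j == a)%:R).
Definition dual_idem r (y : 'I_n) (a : 'I_d.+1) : 'M[F]_n :=
  \matrix_(i, j) (((i == j) && (r y i == a))%:R).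

Inductive in_T r (y : 'I_n) : 'M[F]_n -> Prop :=
  | inT_A a : in_T r y (adj_mx r a)
  | inT_E a : in_T r y (dual_idem r y a)
  | inT_0 : in_T r y 0
  | inT_add M N : in_T r y M -> in_T r y N -> in_T r y (M + N)
  | inT_scale (c : F) M : in_T r y M -> in_T r y (c *: M)
  | inT_mul M N : in_T r y M -> in_T r y N -> in_T r y (M * N).

Definition left_ideal (T L : 'M[F]_n -> Prop) : Prop :=
  (forall M, L M -> T M) /\ L 0 /\
  (forall M N, L M -> L N -> L (M + N)) /\
  (forall M, L M -> L (- M)) /\
  (forall Y M, T Y -> L M -> L (Y * M)).

Definition maximal_left_ideal (T L : 'M[F]_n -> Prop) : Prop :=
  left_ideal T L /\ (exists M, T M /\ ~ L M) /\
  (forall L', left_ideal T L' -> (forall M, L M -> L' M) ->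
     (forall M, L' M <-> L M) \/ (forall M, L' M <-> T M)).

Definition jacobson_radical (T : 'M[F]_n -> Prop) (M : 'M[F]_n) : Prop :=
  T M /\ forall L, maximal_left_ideal T L -> L M.

End Scheme.

Definition has_char (F : fieldType) (p : nat) : Prop :=
  if p == 0%N then [pchar F] =i pred0 else p \in [pchar F].

(* Main.v *)
Require Import Defs.
From mathcomp Require Import all_boot all_order all_algebra.
From Stdlib Require Import Classical.
Import GRing.Theory.
Local Open Scope ring_scope.

Lemma sum_class (F : fieldType) (n d : nat) (f : 'I_n -> F) (g : 'I_n -> 'I_d.+1)
  (S1 S2 : pred 'I_n) :
  (forall l l', g l = g l' -> f l = f l') ->
  (forall j, #|[set m | S1 m && (g m == j)]| = #|[set m | S2 m && (g m == j)]|) ->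
  \sum_(m | S1 m) f m = \sum_(m | S2 m) f m.
Proof.
move=> fg hc.
rewrite (partition_big g xpredT) // [RHS](partition_big g xpredT) //.
apply: eq_bigr => j _.
case: (pickP (fun m => g m == j)) => [m0 /eqP gm0 | none].
  rewrite (eq_bigr (fun _ => f m0)); last first.
    by move=> m /andP[_ /eqP]; rewrite -gm0; apply: fg.
  rewrite [RHS](eq_bigr (fun _ => f m0)); last first.
    by move=> m /andP[_ /eqP]; rewrite -gm0; apply: fg.
  rewrite (eq_bigl (fun m => m \in [set m | S1 m && (g m == j)])); last first.
    by move=> m; rewrite inE.
  rewrite [RHS](eq_bigl (fun m => m \in [set m | S2 m && (g m == j)])); last first.
    by move=> m; rewrite inE.
  by rewrite !sumr_const hc.
by rewrite !big_pred0 // => m; rewrite none andbF.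
Qed.
Section Main.
Variables (F : fieldType) (n d : nat) (r : 'I_n -> 'I_n -> 'I_d.+1) (x : 'I_n).
Hypothesis Hs : is_scheme r.

Definition colc (v : 'cV[F]_n) := forall l l', r x l = r x l' -> v l 0 = v l' 0.
Definition rowc (u : 'rV[F]_n) := forall l l', r x l = r x l' -> u 0 l = u 0 l'.

Lemma diagE y z : r y z = ord0 <-> y = z.
Proof. by case: Hs => _ [_ [H _]]. Qed.

Lemma trE {y l l'} : r y l = r y l' -> r l y = r l' y.
Proof.
case: Hs => _ [_ [_ [Ht _]]] e.
have [c' Hc] := Ht (r y l).
by rewrite (proj1 (Hc l y) erefl) (proj1 (Hc l' y) (esym e)).
Qed.

Lemma trE' {y l l'} : r l y = r l' y -> r y l = r y l'.
Proof.
case: Hs => _ [_ [_ [Ht _]]] e.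
have [c' Hc] := Ht (r y l).
have h1 : r l y = c' by apply/(Hc l y).
by apply/esym/(Hc l' y); rewrite -e.
Qed.

Lemma interE i j {m1 n1 m2 n2} : r m1 n1 = r m2 n2 ->
  inter_num r i j m1 n1 = inter_num r i j m2 n2.
Proof. by case: Hs => _ [_ [_ [_ H]]] e; apply: (H _ _ _ _ _ _ _ erefl (esym e)). Qed.

Lemma colc_inv Y : in_T r x Y -> forall v, colc v -> colc (Y *m v).
Proof.
elim=> {Y}.
- move=> b v cv l l' e; rewrite !mxE.
  rewrite (eq_bigr (fun m => if r l m == b then v m 0 else 0)); last first.
    by move=> m _; rewrite mxE; case: eqP; rewrite ?mul1r ?mul0r.
  rewrite [RHS](eq_bigr (fun m => if r l' m == b then v m 0 else 0)); last first.
    by move=> m _; rewrite mxE; case: eqP; rewrite ?mul1r ?mul0r.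
  rewrite -!big_mkcond /=.
  apply: (@sum_class F n d _ (fun m => r m x)).
    by move=> m m' /trE' /cv.
  move=> j; have := interE b j (trE e); rewrite /inter_num.
  by [].
- move=> a v cv l l' e; rewrite !mxE.
  rewrite (bigD1 l) //= [RHS](bigD1 l') //= !big1 ?addr0.
  + by rewrite !mxE !eqxx /= e (cv _ _ e).
  + by move=> m /negbTE; rewrite !mxE eq_sym => ->; rewrite mul0r.
  + by move=> m /negbTE; rewrite !mxE eq_sym => ->; rewrite mul0r.
- by move=> v _ l l' _; rewrite mul0mx !mxE.
- move=> M N _ IM _ IN v cv l l' e.
  by move: (IM v cv l l' e) (IN v cv l l' e); rewrite mulmxDl !mxE => -> ->.
- move=> c M _ IM v cv l l' e.
  by move: (IM v cv l l' e); rewrite -scalemxAl !mxE => ->.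
- move=> M N _ IM _ IN v cv; rewrite -mulmxE -mulmxA.
  by apply: IM; apply: IN.
Qed.

Lemma rowc_inv Y : in_T r x Y -> forall u, rowc u -> rowc (u *m Y).
Proof.
elim=> {Y}.
- move=> b u cu l l' e; rewrite !mxE.
  rewrite (eq_bigr (fun m => if r m l == b then u 0 m else 0)); last first.
    by move=> m _; rewrite mxE; case: eqP; rewrite ?mulr1 ?mulr0.
  rewrite [RHS](eq_bigr (fun m => if r m l' == b then u 0 m else 0)); last first.
    by move=> m _; rewrite mxE; case: eqP; rewrite ?mulr1 ?mulr0.
  rewrite -!big_mkcond /=.
  apply: (@sum_class F n d _ (fun m => r x m)).
    by move=> m m' /cu.
  move=> j; have := interE j b e; rewrite /inter_num.
  have sw k : [set m | (r m k == b) && (r x m == j)] = [set m | (r x m == j) && (r m k == b)].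
    by apply/setP => m; rewrite !inE andbC.
  by rewrite !sw.
- move=> a u cu l l' e; rewrite !mxE.
  rewrite (bigD1 l) //= [RHS](bigD1 l') //= !big1 ?addr0.
  + by rewrite !mxE !eqxx /= e (cu _ _ e).
  + by move=> m /negbTE; rewrite !mxE => ->; rewrite mulr0.
  + by move=> m /negbTE; rewrite !mxE => ->; rewrite mulr0.
- by move=> u _ l l' _; rewrite mulmx0 !mxE.
- move=> M N _ IM _ IN u cu l l' e.
  by move: (IM u cu l l' e) (IN u cu l l' e); rewrite mulmxDr !mxE => -> ->.
- move=> c M _ IM u cu l l' e.
  by move: (IM u cu l l' e); rewrite -scalemxAr !mxE => ->.
- move=> M N _ IM _ IN u cu; rewrite -mulmxE mulmxA.
  by apply: IN; apply: IM.
Qed.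


Definition chi i : 'cV[F]_n := \col_l ((r x l == i)%:R).
Definition ex : 'cV[F]_n := \col_l ((l == x)%:R).

Lemma sum_delta (z : 'I_n) (g : 'I_n -> F) : \sum_k (k == z)%:R * g k = g z.
Proof.
rewrite (bigD1 z) //= eqxx mul1r big1 ?addr0 // => k /negbTE ->.
by rewrite mul0r.
Qed.

Lemma sum_delta' (z : 'I_n) (g : 'I_n -> F) : \sum_k g k * (k == z)%:R = g z.
Proof.
by rewrite -[RHS](sum_delta z); apply: eq_bigr => k _; rewrite mulrC.
Qed.

Lemma E_mul a p (B : 'M[F]_(n, p)) :
  dual_idem F r x a *m B = \matrix_(i, j) ((r x i == a)%:R * B i j).
Proof.
apply/matrixP => i j; rewrite !mxE.
rewrite (bigD1 i) //= big1 ?addr0; first by rewrite mxE eqxx.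
by move=> k /negbTE; rewrite mxE eq_sym => ->; rewrite mul0r.
Qed.

Lemma mul_E a p (B : 'M[F]_(p, n)) :
  B *m dual_idem F r x a = \matrix_(i, j) (B i j * (r x j == a)%:R).
Proof.
apply/matrixP => i j; rewrite !mxE.
rewrite (bigD1 j) //= big1 ?addr0; first by rewrite mxE eqxx.
by move=> k /negbTE; rewrite mxE => ->; rewrite mulr0.
Qed.

Lemma class_sum (f : 'I_n -> F) y :
  (forall l l', r x l = r x l' -> f l = f l') ->
  \sum_(m | r x m == r x y) f m = f y *+ valency_at r (r x y) x.
Proof.
move=> cf.
rewrite (eq_bigr (fun _ => f y)); last by move=> m /eqP /cf.
rewrite (eq_bigl (fun m => m \in [set z | r x z == r x y])); last first.
  by move=> m; rewrite inE.
by rewrite sumr_const.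
Qed.

Lemma chi_colc i : colc (chi i).
Proof. by move=> l l' e; rewrite !mxE e. Qed.

Lemma chi_gen i : exists W, in_T r x W /\ W *m ex = chi i.
Proof.
case: Hs => _ [_ [_ [Ht _]]].
have [c' Hc] := Ht i.
exists (adj_mx F r c'); split; first by constructor.
apply/matrixP => l k; rewrite !mxE.
rewrite (eq_bigr (fun m => (r l m == c')%:R * (m == x)%:R)); last first.
  by move=> m _; rewrite !mxE.
rewrite sum_delta'.
have -> : (r l x == c') = (r x l == i).
  by apply/eqP/eqP => /(Hc l x).
by [].
Qed.

Lemma A0_one : adj_mx F r ord0 = 1%:M.
Proof.
apply/matrixP => i j; rewrite !mxE.
have -> : (r i j == ord0) = (i == j) by apply/eqP/eqP => /diagE.
by [].
Qed.

Lemma rxx : r x x = ord0.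
Proof. exact/diagE. Qed.


Hypothesis knz : forall i, (valency_at r i x)%:R != 0 :> F.

Lemma gen_ex v : colc v -> v != 0 -> exists Z, in_T r x Z /\ Z *m v = ex.
Proof.
move=> cv vnz.
have [y vy] : exists y, v y 0 != 0.
  case: (pickP (fun y => v y 0 != 0)) => [y vy|none]; first by exists y.
  case/eqP: vnz; apply/matrixP => i j; rewrite (ord1 j) mxE.
  by move: (none i) => /negbFE/eqP.
set i := r x y.
set c := v y 0 * (valency_at r i x)%:R.
have cnz : c != 0 by rewrite mulf_neq0 // knz.
exists (c^-1 *: (dual_idem F r x ord0 * adj_mx F r i * dual_idem F r x i)).
split.
  by apply: inT_scale; apply: inT_mul; [apply: inT_mul|]; constructor.
rewrite -scalemxAl -!mulmxE -!mulmxA !E_mul.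
apply/matrixP => l k; rewrite (ord1 k) !mxE.
case: (eqVneq l x) => [->|lx].
  rewrite rxx eqxx mul1r.
  rewrite (eq_bigr (fun m => if r x m == i then v m 0 else 0)); last first.
    by move=> m _; rewrite !mxE; case: eqP; rewrite ?mul1r ?mul0r.
  rewrite -big_mkcond /= class_sum //.
  rewrite -[_ *+ _]mulr_natr -/c mulVf //.
have -> : (r x l == ord0) = false.
  by apply/negbTE; apply: contra lx => /eqP /diagE ->.
by rewrite mul0r mulr0.
Qed.

Definition annI (w : 'cV[F]_n) := fun Y : 'M[F]_n => in_T r x Y /\ Y *m w = 0.

Lemma inT_opp (Y : 'M[F]_n) : in_T r x Y -> in_T r x (- Y).
Proof. by move=> h; rewrite -scaleN1r; apply: inT_scale. Qed.

Lemma ann_max w : colc w -> (exists W, in_T r x W /\ W *m ex = w) -> w != 0 ->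
  maximal_left_ideal (in_T r x) (annI w).
Proof.
move=> cw [W [TW Ww]] wnz.
have lid : left_ideal (in_T r x) (annI w).
  split; first by move=> M [].
  split; first by split; [constructor|rewrite mul0mx].
  split; first by move=> M N [TM HM] [TN HN]; split; [constructor|rewrite mulmxDl HM HN addr0].
  split; first by move=> M [TM HM]; split; [apply: inT_opp|rewrite mulNmx HM oppr0].
  by move=> Y M TY [TM HM]; split; [constructor|rewrite -mulmxE -mulmxA HM mulmx0].
split=> //; split.
  exists (adj_mx F r ord0); split; first by constructor.
  by rewrite /annI A0_one mul1mx => -[_ /eqP]; rewrite (negbTE wnz).
move=> L' lid' sub.
case: (classic (exists Y, L' Y /\ Y *m w != 0)) => [[Y [LY Yw]]|none]; last first.
  left=> M; split; last by apply: sub.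
  move=> LM; split; first by case: lid' => H _; apply: H.
  by case: (eqVneq (M *m w) 0) => // h; case: none; exists M.
right=> M; split; first by case: lid' => H _; apply: H.
move=> TM.
have TY : in_T r x Y by case: lid' => H _; apply: H.
have [Z [TZ Zv]] := gen_ex _ (colc_inv _ TY _ cw) Yw.
have dec : M = M * W * Z * Y + (M - M * W * Z * Y) by rewrite addrC subrK.
case: lid' => _ [_ [addL [_ mulL]]].
rewrite dec; apply: addL.
  apply: mulL => //; apply: inT_mul => //; apply: inT_mul => //.
apply: sub; split.
  by apply: inT_add => //; apply: inT_opp; do 3! apply: inT_mul => //.
rewrite mulmxBl -!mulmxE -!mulmxA Zv Ww subrr.
by [].
Qed.

Lemma key N : (forall L, maximal_left_ideal (in_T r x) L -> L N) ->
  forall i, N *m chi i = 0.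
Proof.
move=> HN i; case: (eqVneq (chi i) 0) => [->|nz]; first by rewrite mulmx0.
by have [] := HN _ (ann_max _ (chi_colc i) (chi_gen i) nz).
Qed.


Lemma val1 a : valency_at r a x = 1%N -> exists z, forall m, (r x m == a) = (m == z).
Proof.
move=> /eqP /cards1P [z hz]; exists z => m.
by move/setP: hz => /(_ m); rewrite !inE.
Qed.

Lemma partii a (M : 'M[F]_n) : valency_at r a x = 1%N ->
  (forall L, maximal_left_ideal (in_T r x) L -> L M) -> M * dual_idem F r x a = 0.
Proof.
move=> /val1 [z hz] HM.
have h := key _ HM a.
rewrite -mulmxE mul_E; apply/matrixP => i j; rewrite !mxE hz.
case: (eqVneq j z) => [->|_]; last by rewrite mulr0.
rewrite mulr1.
have := congr1 (fun A : 'cV[F]_n => A i 0) h; rewrite !mxE.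
rewrite (eq_bigr (fun m => M i m * (m == z)%:R)); last by move=> m _; rewrite !mxE hz.
by rewrite sum_delta'.
Qed.

Lemma parti a (M : 'M[F]_n) : valency_at r a x = 1%N -> in_T r x M ->
  (forall L, maximal_left_ideal (in_T r x) L -> L M) -> dual_idem F r x a * M = 0.
Proof.
move=> /val1 [z hz] TM HM.
set N := adj_mx F r a * dual_idem F r x a * M.
have TN : in_T r x N by apply: inT_mul => //; apply: inT_mul; constructor.
have HN : forall L, maximal_left_ideal (in_T r x) L -> L N.
  move=> L hL; case: (hL) => [[_ [_ [_ [_ mulL]]]] _]; apply: mulL.
    by apply: inT_mul; constructor.
  exact: HM.
have NE m : N x m = M z m.
  rewrite /N -!mulmxE -mulmxA E_mul mxE.
  rewrite (eq_bigr (fun k => (k == z)%:R * M k m)); last first.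
    by move=> k _; rewrite !mxE hz mulrA -natrM mulnb andbb.
  by rewrite sum_delta.
clearbody N.
pose u : 'rV[F]_n := \row_l ((l == x)%:R).
have cu : rowc u.
  move=> l l' e; rewrite !mxE.
  have -> : (l == x) = (l' == x); last by [].
  apply/eqP/eqP => h.
    by rewrite h rxx in e; apply/esym/diagE; rewrite -e.
  by rewrite h rxx in e; apply/esym/diagE; rewrite e.
have cuN := rowc_inv _ TN _ cu.
have uN0 : u *m N = 0.
  apply/matrixP => k m; rewrite (ord1 k) [RHS]mxE.
  have : ((u *m N) *m chi (r x m)) 0 0 = 0 by rewrite -mulmxA (key _ HN) mulmx0 mxE.
  rewrite mxE (eq_bigr (fun l => if r x l == r x m then (u *m N) 0 l else 0)); last first.
    by move=> l _; rewrite [chi _ _ _]mxE; case: eqP; rewrite ?mulr1 ?mulr0.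
  rewrite -big_mkcond /= class_sum //.
  move/eqP; rewrite -mulr_natr mulf_eq0 (negbTE (knz _)) orbF.
  by move/eqP.
have N0 m : N x m = 0.
  have := congr1 (fun A : 'rV[F]_n => A 0 m) uN0; rewrite !mxE.
  rewrite (eq_bigr (fun l => (l == x)%:R * N l m)); last by move=> l _; rewrite mxE.
  by rewrite sum_delta.
rewrite -mulmxE E_mul; apply/matrixP => i j; rewrite !mxE hz.
case: (eqVneq i z) => [->|_]; last by rewrite mul0r.
by rewrite mul1r -NE N0.
Qed.

End Main.

Theorem lemma5p1 (F : fieldType) (p n d : nat)
    (r : 'I_n -> 'I_n -> 'I_d.+1) (x : 'I_n) (M : 'M[F]_n) :
  has_char F p ->
  is_scheme r ->
  p'valenced p r ->
  jacobson_radical (in_T r x) M ->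
  (~ exists a : 'I_d.+1, valency_at r a x = 1%N /\ dual_idem F r x a * M != 0) /\
  (~ exists a : 'I_d.+1, valency_at r a x = 1%N /\ M * dual_idem F r x a != 0).
Proof.
move=> hc hs hp [TM HM].
have knz : forall i, (valency_at r i x)%:R != 0 :> F.
  move=> i; move: (hp i x); rewrite /has_char in hc.
  case: (eqVneq p 0%N) hc => [-> /= h0 | pn0 /= hpc].
    by rewrite dvd0n (proj1 (pcharf0P F) h0).
  by rewrite (dvdn_pcharf hpc).
split.
  case=> a [va ne].
  by rewrite (@parti F n d r x hs knz a M va TM HM) eqxx in ne.
case=> a [va ne].
by rewrite (@partii F n d r x hs knz a M va HM) eqxx in ne.
Qed.
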